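(* Let $X$ be a positive random variable with $\mathbb{E}X = 1$ and $\mathbb{E}(X\log X) > \log 2$. Then there is a unique $\alpha\in(0,1)$ such that \[ \mathbb{E}\left(\frac{X^{\alpha}}{\mathbb{E} X^{\alpha}}\log \frac{X^{\alpha}}{\mathbb{E} X^{\alpha}}\right) = \log 2 . \] *)

(* Defs.v *)
From HB Require Import structures.
From mathcomp Require Import all_boot all_order all_algebra.
From mathcomp Require Import all_classical all_reals all_analysis.
Set Implicit Arguments. Unset Strict Implicit. Unset Printing Implicit Defensive.
Import Order.TTheory GRing.Theory Num.Theory.
Local Open Scope ring_scope.
Local Open Scope ereal_scope.

(* E[X^a] as a real number (finite for 0 < a < 1 when E X = 1, X > 0). *)
Definition moment {d} {T : measurableType d} {R : realType}
  (P : probability T R) (X : T -> R) (a : R) : R :=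
  fine (\int[P]_x ((X x) `^ a)%:E).

Definition tilted {d} {T : measurableType d} {R : realType}
  (P : probability T R) (X : T -> R) (a : R) : T -> R :=
  fun x => ((X x) `^ a / moment P X a)%R.

(* Main.v *)
Require Import Defs.
From HB Require Import structures.
From mathcomp Require Import all_boot all_order all_algebra.
From mathcomp Require Import all_classical all_reals all_analysis.
From mathcomp Require Import measurable_realfun ring lra.
Import Order.TTheory GRing.Theory Num.Theory.
Import numFieldNormedType.Exports.
Local Open Scope classical_set_scope.
Local Open Scope ring_scope.

Section elem.
Context {R : realType}.
Implicit Types (a l t s u : R).

Lemma le_expR_id t : t <= expR t.
Proof. have := expR_ge1Dx t; lra. Qed.

Lemma E1 a l : 0 <= a <= 1 -> expR (a * l) <= 1 + expR l.
Proof.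
move=> /andP[a0 a1]; have [l0|l0] := leP 0 l.
- have : a * l <= l by rewrite -[leRHS]mul1r ler_wpM2r.
  rewrite -ler_expR => h; have := expR_ge0 0; lra.
- have : a * l <= 0 by rewrite mulr_ge0_le0 // ltW.
  rewrite -ler_expR expR0 => h; have := expR_ge0 l; lra.
Qed.

Lemma E2r a l : 0 <= a < 1 -> expR (a * l) * l <= expR l / (1 - a).
Proof.
move=> /andP[a0 a1]; have a1' : 0 < 1 - a by lra.
have [l0|l0] := leP 0 l.
- rewrite ler_pdivlMr //.
  have h := le_expR_id ((1 - a) * l).
  have -> : expR l = expR (a * l) * expR ((1 - a) * l).
    by rewrite -expRD; congr expR; ring.
  rewrite -mulrA ler_wpM2l ?expR_ge0 //; lra.
- apply: le_trans (_ : 0 <= _); last by rewrite divr_ge0 ?expR_ge0 // ltW.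
  by rewrite mulr_ge0_le0 ?expR_ge0 // ltW.
Qed.

Lemma E2l a l : 0 < a -> - a^-1 <= expR (a * l) * l.
Proof.
move=> a0; have [l0|l0] := leP 0 l.
  apply: le_trans (_ : 0 <= _); last by rewrite mulr_ge0 ?expR_ge0.
  by rewrite oppr_le0 invr_ge0 ltW.
have h := le_expR_id (- (a * l)).
rewrite expRN -(ler_pM2l (expR_gt0 (a * l))) mulfV ?gt_eqF ?expR_gt0 // in h.
rewrite -(ler_pM2l a0) mulrN mulfV ?gt_eqF //.
have -> : a * (expR (a * l) * l) = - (expR (a * l) * - (a * l)) by ring.
lra.
Qed.

Lemma E2 a l : 0 < a < 1 -> `|expR (a * l) * l| <= a^-1 + expR l / (1 - a).
Proof.
move=> /andP[a0 a1]; have a1' : 0 < 1 - a by lra.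
have h1 : expR (a * l) * l <= expR l / (1 - a) by apply: E2r; rewrite a1 ltW.
have h2 := @E2l a l a0.
have i0 : 0 <= a^-1 by rewrite invr_ge0 ltW.
have i1 : 0 <= expR l / (1 - a) by rewrite divr_ge0 ?expR_ge0 ?ltW.
rewrite ler_norml; apply/andP; split; lra.
Qed.

Lemma E3 a l : 0 <= a <= 1 -> expR (a * l) <= a * expR l + (1 - a).
Proof.
move=> /andP[a0 a1].
have hA := expR_ge1Dx ((1 - a) * l).
have hB := expR_ge1Dx (- (a * l)).
have eA : expR l = expR (a * l) * expR ((1 - a) * l).
  by rewrite -expRD; congr expR; ring.
have eB : 1 = expR (a * l) * expR (- (a * l)) by rewrite -expRD subrr expR0.
set E := expR (a * l) in eA eB *.
set A := expR ((1 - a) * l) in hA eA; set B := expR (- (a * l)) in hB eB.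
have E0 : 0 < E by rewrite /E expR_gt0.
have k1 : 0 <= a * (A - (1 + (1 - a) * l)) by rewrite mulr_ge0 // subr_ge0.
have k2 : 0 <= (1 - a) * (B - (1 + - (a * l))) by rewrite mulr_ge0 // subr_ge0 //; lra.
have key : 1 <= a * A + (1 - a) * B.
  have : a * (A - (1 + (1 - a) * l)) + (1 - a) * (B - (1 + - (a * l))) = a * A + (1 - a) * B - 1 by ring.
  lra.
have : E * 1 <= E * (a * A + (1 - a) * B) by rewrite ler_wpM2l // ltW.
have -> : E * (a * A + (1 - a) * B) = a * (E * A) + (1 - a) * (E * B) by ring.
rewrite -eB -eA; lra.
Qed.

Lemma E4 u t : 0 <= u -> u - u * expR (- t) <= u * t.
Proof.
move=> u0; have h := expR_ge1Dx (- t).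
have : u * (1 - t) <= u * expR (- t) by rewrite ler_wpM2l //; lra.
lra.
Qed.

Lemma E5 s : 0 <= (expR s - 1) * s.
Proof.
have [s0|s0] := leP 0 s.
  by rewrite mulr_ge0 // subr_ge0 -expR0 ler_expR.
by rewrite mulr_le0 // ?subr_le0 -?expR0 ?ler_expR ltW.
Qed.

Lemma E5s s : s != 0 -> 0 < (expR s - 1) * s.
Proof.
move=> s0; have h := expR_gt1Dx s0.
have [sp|sn] := ltP 0 s; first by rewrite mulr_gt0 //; lra.
have sn' : s < 0 by rewrite lt_neqAle s0 sn.
have e1 : expR s < 1 by rewrite -expR0 ltr_expR.
by rewrite -mulrNN mulr_gt0 // oppr_gt0 // subr_lt0.
Qed.

Lemma E6 l : -1 <= expR l * l.
Proof. by have := @E2l 1 l ltr01; rewrite invr1 mul1r. Qed.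

Lemma alg_small (a L M : R) : 0 < a -> a <= 16^-1 -> L <= 2 -> 3/4 < M ->
  a * L / M - ln M < ln 2.
Proof.
move=> a0 a16 L2 M34.
have M0 : 0 < M by apply: lt_trans M34; rewrite divr_gt0.
have k1 : a * L <= a * 2 by rewrite ler_wpM2l // ltW.
have k2 : a * L / M <= 6^-1.
  rewrite ler_pdivrMr //; lra.
have M2 : 0 < 2 * M by rewrite mulr_gt0.
have k3 : 1 - (2 * M)^-1 <= ln (2 * M).
  have h := @le_ln1Dx R ((2 * M)^-1 - 1).
  rewrite (_ : 1 + ((2 * M)^-1 - 1) = (2 * M)^-1) ?lnV ?posrE // in h; last by rewrite addrC subrK.
  have : -1 < (2 * M)^-1 - 1 by rewrite ltrBrDl subrr invr_gt0.
  by move=> /h; lra.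
have k4 : (2 * M)^-1 < 3^-1 * 2.
  rewrite -[X in X < _]div1r ltr_pdivrMr // ; lra.
rewrite lnM ?posrE // in k3.
lra.
Qed.

Lemma alg_large (a L M : R) : 0 < M -> M <= 1 -> a * L / M - ln M <= ln 2 ->
  a * L <= ln 2.
Proof.
move=> M0 M1 h.
have l2 : 0 <= ln (2 : R) by apply: ln_ge0; rewrite ler1n.
have lM : ln M <= 0 by exact: ln_le0.
have h1 : a * L / M <= ln 2 + ln M by lra.
rewrite ler_pdivrMr // in h1.
have h2 : (ln 2 + ln M) * M <= ln 2.
  rewrite mulrDl.
  have : ln 2 * M <= ln 2 by rewrite -[leRHS]mulr1 ler_wpM2l.
  have : ln M * M <= 0 by rewrite mulr_le0_ge0 // ltW.
  lra.
lra.
Qed.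

End elem.

Section main.
Context d (T : measurableType d) (R : realType) (P : probability T R) (X : T -> R).
Hypothesis mX : measurable_fun setT X.
Hypothesis Xpos : forall t, 0 < X t.
Hypothesis EX1 : (\int[P]_x (X x)%:E = 1)%E.

Definition pw a x := expR (a * ln (X x)).
Definition Mf a := \int[P]_x pw a x.
Definition Lf a := \int[P]_x (pw a x * ln (X x)).
Definition hf a := a * Lf a / Mf a - ln (Mf a).

Lemma XE x : X x = expR (ln (X x)).
Proof. by rewrite lnK // posrE. Qed.

Lemma mlnX : measurable_fun setT (fun x => ln (X x)).
Proof. by apply: measurableT_comp => //; exact: measurable_ln. Qed.

Lemma mpw a : measurable_fun setT (pw a).
Proof.
apply: measurableT_comp => //.
by apply: measurable_funM => //; exact: mlnX.
Qed.

Lemma mpwl a : measurable_fun setT (fun x => pw a x * ln (X x)).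
Proof. by apply: measurable_funM; [exact: mpw|exact: mlnX]. Qed.

Lemma intX : P.-integrable setT (EFin \o X).
Proof.
apply/integrableP; split; first exact/measurable_EFinP.
under eq_integral do rewrite /= ger0_norm ?(ltW (Xpos _))//.
by rewrite EX1 ltry.
Qed.

Lemma intcst k : P.-integrable setT (EFin \o cst k).
Proof. exact: finite_measure_integrable_cst. Qed.

Lemma intlin (k c : R) : P.-integrable setT (EFin \o (fun x => k + c * X x)).
Proof.
have -> : EFin \o (fun x => k + c * X x) = (EFin \o cst k) \+ (fun x => (c%:E * (EFin \o X) x)%E).
  by apply/funext => x.
apply: integrableD => //; first exact: intcst.
exact: integrableZl intX.
Qed.

Lemma intpw a : 0 <= a <= 1 -> P.-integrable setT (EFin \o pw a).
Proof.
move=> a01; apply: le_integrable (intlin 1 1) => //.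
  exact/measurable_EFinP/mpw.
move=> x _; rewrite /= ger0_norm ?expR_ge0 // ger0_norm; last first.
  by rewrite mul1r addr_ge0 // ltW.
by rewrite mul1r /pw {2}XE; exact: E1.
Qed.

Lemma intpwl a : 0 < a < 1 -> P.-integrable setT (EFin \o (fun x => pw a x * ln (X x))).
Proof.
move=> a01; apply: le_integrable (intlin a^-1 (1 - a)^-1) => //.
  exact/measurable_EFinP/mpwl.
move=> x _; rewrite /= lee_fin [X in _ <= X]ger0_norm; last first.
  case/andP: a01 => a0 a1.
  by rewrite addr_ge0 ?mulr_ge0 ?invr_ge0 ?ltW ?subr_gt0 // ltW.
by rewrite /pw {3}XE [(1 - a)^-1 * _]mulrC; exact: E2.
Qed.

Lemma intD (f g : T -> R) : P.-integrable setT (EFin \o f) ->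
  P.-integrable setT (EFin \o g) -> P.-integrable setT (EFin \o (fun x => f x + g x)).
Proof. by move=> hf hg; apply: (eq_integrable measurableT _ _ _ (integrableD measurableT hf hg)) => x _. Qed.

Lemma intZ (k : R) (f : T -> R) : P.-integrable setT (EFin \o f) ->
  P.-integrable setT (EFin \o (fun x => k * f x)).
Proof. by move=> hf; apply: (eq_integrable measurableT _ _ _ (integrableZl measurableT k hf)) => x _. Qed.

Lemma Rint_lin a b (al be ga de : R) : 0 < a < 1 -> 0 < b < 1 ->
  \int[P]_x (al * pw a x + be * (pw a x * ln (X x)) + ga * pw b x + de * (pw b x * ln (X x)))
  = al * Mf a + be * Lf a + ga * Mf b + de * Lf b.
Proof.
move=> ha hb.
have ha' : 0 <= a <= 1 by case/andP: ha => *; rewrite !ltW.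
have hb' : 0 <= b <= 1 by case/andP: hb => *; rewrite !ltW.
have ia := @intpw a ha'; have ila := @intpwl a ha.
have ib := @intpw b hb'; have ilb := @intpwl b hb.
rewrite !RintegralD //; try by repeat (apply: intD || apply: intZ || assumption).
by rewrite !RintegralZl.
Qed.

Lemma ae_false : (\forall x \ae P, False) -> False.
Proof.
case=> N [mN PN0 sub].
have : (P setT <= P N)%E by apply: le_measure; rewrite ?inE //; move=> x _; exact: sub.
by rewrite probability_setT PN0 lee_fin ler10.
Qed.

Lemma ae_zero (F : T -> R) : P.-integrable setT (EFin \o F) ->
  (forall x, 0 <= F x) -> \int[P]_x F x = 0 -> \forall x \ae P, F x = 0.
Proof.
move=> iF F0 h0.
have h1 : (\int[P]_x (F x)%:E = 0)%E.
  by rewrite -[LHS]fineK ?integrable_fin_num // -/(Rintegral P setT F) h0.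
have h2 : (\int[P]_x `|(F x)%:E| = 0)%E.
  by rewrite -h1; apply: eq_integral => x _; rewrite gee0_abs // lee_fin.
have := (ae_eq_integral_abs P measurableT (measurable_int _ iF)).1 h2.
by apply: filterS => x /(_ I) /= [].
Qed.

Lemma Rint_cst k : \int[P]_x k = k.
Proof. rewrite Rintegral_cst // -[RHS]mulr1; congr (_ * _); have hP := probability_setT P; rewrite -[X in _ = X]/(fine 1%E) -hP //. Qed.

Lemma RX1 : \int[P]_x X x = 1.
Proof. by rewrite /Rintegral EX1. Qed.

Lemma Rint_linX k c : \int[P]_x (k + c * X x) = k + c.
Proof.
rewrite RintegralD //; last 2 first.
- exact: intcst.
- exact: intZ intX.
by rewrite Rint_cst RintegralZl ?RX1 ?mulr1 //; exact: intX.
Qed.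

Lemma Mle1 a : 0 <= a <= 1 -> Mf a <= 1.
Proof.
move=> ha; apply: le_trans (_ : \int[P]_x ((1 - a) + a * X x) <= _).
  apply: le_Rintegral => //; first exact: intpw.
    exact: intlin.
  by move=> x _; rewrite /pw {2}XE addrC; exact: E3.
by rewrite Rint_linX subrK.
Qed.

Lemma Mpos a : 0 <= a <= 1 -> 0 < Mf a.
Proof.
move=> ha; have h0 : 0 <= Mf a by apply: Rintegral_ge0 => x _; exact: expR_ge0.
rewrite lt_neqAle h0 andbT; apply/negP => /eqP h.
have := @ae_zero (pw a) (@intpw a ha) (fun x => expR_ge0 _) (esym h).
move=> hae; apply: ae_false; apply: filterS hae => x.
by move/eqP; rewrite gt_eqF // expR_gt0.
Qed.

Lemma pwE a x : (X x) `^ a = pw a x.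
Proof. by rewrite /powR gt_eqF // Xpos. Qed.

Lemma moment_eq a : moment P X a = Mf a.
Proof. by rewrite /moment /Mf /Rintegral; congr fine; apply: eq_integral => x _; rewrite pwE. Qed.

Lemma int_lin a b (al be ga de : R) : 0 < a < 1 -> 0 < b < 1 ->
  P.-integrable setT (EFin \o (fun x => al * pw a x + be * (pw a x * ln (X x)) + ga * pw b x + de * (pw b x * ln (X x)))).
Proof.
move=> ha hb.
have ha' : 0 <= a <= 1 by case/andP: ha => *; rewrite !ltW.
have hb' : 0 <= b <= 1 by case/andP: hb => *; rewrite !ltW.
have ia := @intpw a ha'; have ila := @intpwl a ha.
have ib := @intpw b hb'; have ilb := @intpwl b hb.
by repeat (apply: intD || apply: intZ || assumption).
Qed.

Lemma ent_eq a : 0 < a < 1 ->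
  (\int[P]_x (tilted P X a x * ln (tilted P X a x))%:E = (hf a)%:E)%E.
Proof.
move=> ha.
have ha' : 0 <= a <= 1 by case/andP: ha => *; rewrite !ltW.
have M0 := @Mpos a ha'.
pose al := - ln (Mf a) / Mf a; pose be := a / Mf a.
have -> : (fun x => (tilted P X a x * ln (tilted P X a x))%:E) =
  EFin \o (fun x => al * pw a x + be * (pw a x * ln (X x)) + 0 * pw a x + 0 * (pw a x * ln (X x))).
  apply/funext => x /=; congr EFin.
  rewrite /tilted moment_eq pwE ln_div ?posrE ?expR_gt0 // /pw expRK /al /be.
  by field; rewrite gt_eqF.
rewrite -[LHS]fineK; last exact/integrable_fin_num/int_lin.
congr EFin; rewrite -/(Rintegral P setT _) Rint_lin // /hf /al /be.
by field; rewrite gt_eqF.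
Qed.

Lemma Pset : ((P : {measure set T -> \bar R}) [set: T] = 1)%E.
Proof. exact: probability_setT. Qed.

Lemma not_const (Hent : ((ln 2)%:E < \int[P]_x (X x * ln (X x))%:E)%E) k :
  (\forall x \ae P, X x = k) -> False.
Proof.
move=> hk.
have e1 : (\int[P]_x (X x)%:E = \int[P]_x (cst k%:E) x)%E.
  apply: ae_eq_integral => //; first exact/measurable_EFinP.
  by apply: filterS hk => x /= ->.
rewrite EX1 integral_cst // Pset mule1 in e1.
case: e1 => k1; subst k.
have e2 : (\int[P]_x (X x * ln (X x))%:E = \int[P]_x (cst 0%:E) x)%E.
  apply: ae_eq_integral => //.
    by apply/measurable_EFinP; apply: measurable_funM => //; exact: mlnX.
  by apply: filterS hk => x /= ->; rewrite ln1 mulr0.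
rewrite e2 integral_cst // Pset mule1 lte_fin in Hent.
by have := ln_gt0 (ltr1n R 2); rewrite ltNge (ltW Hent).
Qed.

Lemma pw_ratio a b c x :
  pw a x * expR ((b - a) * ln (X x) - c) = pw b x * expR (- c).
Proof. by rewrite /pw -!expRD; congr expR; ring. Qed.

Lemma expR_lnB (u v : R) : 0 < u -> 0 < v -> expR (ln u - ln v) = u / v.
Proof. by move=> u0 v0; rewrite expRD expRN !lnK ?posrE. Qed.

Lemma F1_ge0 a b (Ma Mb : R) x : 0 < Ma -> 0 < Mb ->
  0 <= pw b x / Mb * ((b - a) * ln (X x) - ln Mb + ln Ma) - (pw b x / Mb - pw a x / Ma).
Proof.
move=> Ma0 Mb0.
have e : pw b x / Mb * expR (- ((b - a) * ln (X x) - ln Mb + ln Ma)) = pw a x / Ma.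
  have h := pw_ratio b a (ln Ma - ln Mb) x.
  have h2 : - ((b - a) * ln (X x) - ln Mb + ln Ma) = (a - b) * ln (X x) - (ln Ma - ln Mb) by ring.
  rewrite h2 -mulrA [_^-1 * _]mulrC mulrA h (_ : - (ln Ma - ln Mb) = ln Mb - ln Ma); last by ring.
  by rewrite expR_lnB //; field; rewrite !gt_eqF.
have h4 := @E4 R (pw b x / Mb) ((b - a) * ln (X x) - ln Mb + ln Ma) (divr_ge0 (expR_ge0 _) (ltW Mb0)).
rewrite e in h4; lra.
Qed.

Lemma F2E a b c (Ma Mb : R) x : 0 < Ma -> 0 < Mb -> a < b ->
  (b - a) * c = ln Mb - ln Ma ->
  (c / Ma) * pw a x + (- Ma^-1) * (pw a x * ln (X x))
     + (- c / Mb) * pw b x + Mb^-1 * (pw b x * ln (X x))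
  = pw a x / Ma * ((expR ((b - a) * (ln (X x) - c)) - 1)
      * ((b - a) * (ln (X x) - c))) / (b - a).
Proof.
move=> Ma0 Mb0 ab hc.
have ba0 : 0 < b - a by rewrite subr_gt0.
have h := pw_ratio a b ((b - a) * c) x.
rewrite hc (_ : - (ln Mb - ln Ma) = ln Ma - ln Mb) ?expR_lnB // in h; last by ring.
have pa0 : 0 < pw a x by exact: expR_gt0.
rewrite (_ : (b - a) * (ln (X x) - c) = (b - a) * ln (X x) - (ln Mb - ln Ma)); last first.
  by rewrite -hc; ring.
rewrite (_ : expR ((b - a) * ln (X x) - (ln Mb - ln Ma)) = pw b x * (Ma / Mb) / pw a x); last first.
  rewrite -h (_ : (b - a) * ln (X x) + (ln Ma - ln Mb) = (b - a) * ln (X x) - (ln Mb - ln Ma)); last by ring.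
  by field; rewrite gt_eqF.
rewrite -hc; field; rewrite !gt_eqF //.
Qed.

Lemma F1_ge0' a b (Ma Mb : R) x : 0 < Ma -> 0 < Mb ->
  0 <= Ma^-1 * pw a x + 0 * (pw a x * ln (X x))
       + (- (ln Mb - ln Ma) / Mb - Mb^-1) * pw b x + ((b - a) / Mb) * (pw b x * ln (X x)).
Proof.
move=> Ma0 Mb0.
apply: le_trans (@F1_ge0 a b Ma Mb x Ma0 Mb0) _.
by rewrite le_eqVlt; apply/orP; left; apply/eqP; field; rewrite !gt_eqF.
Qed.

Lemma alg1 (Ma Mb La Lb a b : R) : Ma != 0 -> Mb != 0 ->
  Ma^-1 * Ma + 0 * La + (- (ln Mb - ln Ma) / Mb - Mb^-1) * Mb + (b - a) / Mb * Lb
  = (b - a) * (Lb / Mb) - (ln Mb - ln Ma).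
Proof. by move=> h1 h2; field; rewrite h1 h2. Qed.

Lemma alg2 (Ma Mb La Lb c : R) : Ma != 0 -> Mb != 0 ->
  c / Ma * Ma + - Ma^-1 * La + - c / Mb * Mb + Mb^-1 * Lb = Lb / Mb - La / Ma.
Proof. by move=> h1 h2; field; rewrite h1 h2. Qed.

Lemma alg3 (Ma Mb La Lb a b : R) : 0 < a -> 0 < Ma -> 0 < Mb ->
  ln Mb - ln Ma <= (b - a) * (Lb / Mb) -> La / Ma < Lb / Mb ->
  a * La / Ma - ln Ma < b * Lb / Mb - ln Mb.
Proof.
move=> a0 Ma0 Mb0 D1 D2.
have : a * (La / Ma) < a * (Lb / Mb) by rewrite ltr_pM2l.
rewrite mulrBl in D1.
rewrite -[a * La / Ma]mulrA -[b * Lb / Mb]mulrA.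
lra.
Qed.

Lemma hf_mono (Hent : ((ln 2)%:E < \int[P]_x (X x * ln (X x))%:E)%E) a b :
  0 < a -> a < b -> b < 1 -> hf a < hf b.
Proof.
move=> a0 ab b1.
have b0 : 0 < b by apply: lt_trans ab.
have a1 : a < 1 by apply: lt_trans b1.
have ha : 0 < a < 1 by rewrite a0 a1.
have hb : 0 < b < 1 by rewrite b0 b1.
have ha' : 0 <= a <= 1 by rewrite !ltW.
have hb' : 0 <= b <= 1 by rewrite !ltW.
have Ma0 := @Mpos a ha'; have Mb0 := @Mpos b hb'.
have ba0 : 0 < b - a by rewrite subr_gt0.
have D1 : ln (Mf b) - ln (Mf a) <= (b - a) * (Lf b / Mf b).
  have : 0 <= \int[P]_x ((Mf a)^-1 * pw a x + 0 * (pw a x * ln (X x))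
       + (- (ln (Mf b) - ln (Mf a)) / Mf b - (Mf b)^-1) * pw b x + ((b - a) / Mf b) * (pw b x * ln (X x))).
    by apply: Rintegral_ge0 => x _; exact: F1_ge0'.
  by rewrite Rint_lin // alg1 ?gt_eqF // subr_ge0.
have D2 : Lf a / Mf a < Lf b / Mf b.
  pose c := (ln (Mf b) - ln (Mf a)) / (b - a).
  have hc : (b - a) * c = ln (Mf b) - ln (Mf a) by rewrite /c mulrC divfK // gt_eqF.
  pose F2 x := (c / Mf a) * pw a x + (- (Mf a)^-1) * (pw a x * ln (X x))
     + (- c / Mf b) * pw b x + (Mf b)^-1 * (pw b x * ln (X x)).
  have F2ge0 x : 0 <= F2 x.
    rewrite /F2 (@F2E a b c (Mf a) (Mf b) x Ma0 Mb0 ab hc).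
    apply: divr_ge0; last exact: ltW.
    by apply: mulr_ge0; [apply: divr_ge0; [exact: expR_ge0|exact: ltW]|exact: E5].
  have eF2 : \int[P]_x F2 x = Lf b / Mf b - Lf a / Mf a.
    by rewrite /F2 Rint_lin // alg2 // gt_eqF.
  rewrite ltNge; apply/negP => hle.
  have h0 : \int[P]_x F2 x = 0.
    apply/eqP; rewrite eq_le; apply/andP; split.
      by rewrite eF2 subr_le0.
    by apply: Rintegral_ge0 => x _; exact: F2ge0.
  have hae := @ae_zero F2 (@int_lin a b (c / Mf a) (- (Mf a)^-1) (- c / Mf b) ((Mf b)^-1) ha hb) F2ge0 h0.
  apply: (@not_const Hent (expR c)); apply: filterS hae => x h.
  rewrite /F2 (@F2E a b c (Mf a) (Mf b) x Ma0 Mb0 ab hc) in h.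
  have hs : (b - a) * (ln (X x) - c) = 0.
    apply/eqP; apply/negPn/negP => hs.
    have : 0 < pw a x / Mf a * ((expR ((b - a) * (ln (X x) - c)) - 1) * ((b - a) * (ln (X x) - c))) / (b - a).
      by rewrite divr_gt0 // mulr_gt0 ?E5s // divr_gt0 // expR_gt0.
    by rewrite h ltxx.
  move/eqP: hs; rewrite mulf_eq0 gt_eqF //= subr_eq0 => /eqP hl.
  by rewrite XE hl.
by rewrite /hf; apply: alg3.
Qed.

Lemma pw_cont y : continuous (fun a => pw a y).
Proof.
have -> : (fun a => pw a y) = expR \o (fun a => a * ln (X y)) by [].
move=> a; apply: continuous_comp.
  by apply: cvgMl; exact: cvg_id.
exact: continuous_expR.
Qed.

Lemma pwl_cont y : continuous (fun a => pw a y * ln (X y)).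
Proof. by move=> a; apply: cvgMl; exact: pw_cont. Qed.

Lemma M_cont : {in `]0, 1[%classic, continuous Mf}.
Proof.
have h1 : forall a, `]0, 1[%classic a -> P.-integrable setT (EFin \o pw a).
  move=> a; rewrite /= in_itv /= => /andP[a0 a1]; apply: intpw.
  by rewrite !ltW.
have h2 : \forall y \ae P, setT y -> {in `]0, 1[%classic, continuous (pw^~ y)}.
  by apply: aeW => y _ a _; exact: pw_cont.
have h4 : forall a, `]0, 1[%classic a -> \forall y \ae P, setT y -> `|pw a y| <= 1 + 1 * X y.
  move=> a; rewrite /= in_itv /= => /andP[a0 a1]; apply: aeW => y _.
  rewrite ger0_norm ?expR_ge0 // mul1r /pw {2}XE; apply: E1.
  by rewrite !ltW.
have H := (@continuity_under_integral R _ _ P pw setT measurableT 0 1 h1 h2 (fun y => 1 + 1 * X y) (intlin 1 1) h4).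
exact: H.
Qed.

Lemma L_cont a0 : 0 < a0 < 1 -> {for a0, continuous Lf}.
Proof.
move=> /andP[a00 a01].
pose u := a0 / 2; pose v := (1 + a0) / 2.
have u0 : 0 < u by rewrite /u divr_gt0.
have v1 : v < 1 by rewrite /v ltr_pdivrMr //; lra.
have h1 : forall a, `]u, v[%classic a ->
    P.-integrable setT (EFin \o (fun y => pw a y * ln (X y))).
  move=> a; rewrite /= in_itv /= => /andP[ua av]; apply: intpwl.
  by rewrite (lt_trans u0 ua) (lt_trans av v1).
have h2 : \forall y \ae P, setT y ->
    {in `]u, v[%classic, continuous ((fun a y => pw a y * ln (X y))^~ y)}.
  by apply: aeW => y _ a _; exact: pwl_cont.
have h4 : forall a, `]u, v[%classic a -> \forall y \ae P, setT y ->
    `|pw a y * ln (X y)| <= 2 / a0 + 2 / (1 - a0) * X y.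
  move=> a; rewrite /= in_itv /= => /andP[ua av]; apply: aeW => y _.
  have a0' : 0 < a by apply: lt_trans ua.
  have a1' : a < 1 by apply: lt_trans v1.
  have := @E2 R a (ln (X y)); rewrite a0' a1' => /(_ isT); rewrite -XE /pw.
  move=> /le_trans; apply.
  have ia : a^-1 <= 2 / a0.
    rewrite -div1r ler_pdivrMr // mulrC mulrA ler_pdivlMr //.
    by move: ua; rewrite /u ltr_pdivrMr //; lra.
  have ib : (1 - a)^-1 <= 2 / (1 - a0).
    rewrite -div1r ler_pdivrMr ?subr_gt0 // mulrC mulrA ler_pdivlMr ?subr_gt0 //.
    by move: av; rewrite /v ltr_pdivlMr //; lra.
  by apply: lerD => //; rewrite (mulrC (X y)) ler_pM2r ?Xpos.
have H := (@continuity_under_integral R _ _ P (fun a y => pw a y * ln (X y)) setT measurableT u v h1 h2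
   (fun y => 2 / a0 + 2 / (1 - a0) * X y) (intlin _ _) h4).
apply: H; rewrite inE /= in_itv /=; apply/andP; split.
  by rewrite /u ltr_pdivrMr //; lra.
by rewrite /v ltr_pdivlMr //; lra.
Qed.

Definition Gf (a : R) := \int[P]_x pw `|a| x.

Lemma G_cont : {for 0, continuous Gf}.
Proof.
have h1 : forall a, `]-1, 1[%classic a -> P.-integrable setT (EFin \o (fun y => pw `|a| y)).
  move=> a; rewrite /= in_itv /= => /andP[a0 a1]; apply: intpw.
  by rewrite normr_ge0 /= ler_norml !ltW.
have h2 : \forall y \ae P, setT y -> {in `]-1, 1[%classic, continuous ((fun (a : R) y => pw `|a| y)^~ y)}.
  apply: aeW => y _ a _.
  have -> : (fun a => pw `|a| y) = (fun b => pw b y) \o (fun a : R => `|a|) by [].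
  apply: continuous_comp; first exact: norm_continuous.
  exact: pw_cont.
have h4 : forall a, `]-1, 1[%classic a -> \forall y \ae P, setT y -> `|pw `|a| y| <= 1 + 1 * X y.
  move=> a; rewrite /= in_itv /= => /andP[a0 a1]; apply: aeW => y _.
  rewrite ger0_norm ?expR_ge0 // mul1r /pw {2}XE; apply: E1.
  by rewrite normr_ge0 /= ler_norml !ltW.
have H := (@continuity_under_integral R _ _ P (fun (a : R) y => pw `|a| y) setT measurableT (-1) 1 h1 h2
   (fun y => 1 + 1 * X y) (intlin 1 1) h4).
by apply: H; rewrite inE /= in_itv /= ltrN10 ltr01.
Qed.

Lemma G0 : Gf 0 = 1.
Proof.
rewrite /Gf (@eq_Rintegral _ _ _ P _ (fun _ => 1)) ?Rint_cst //.
by move=> x _; rewrite normr0 /pw mul0r expR0.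
Qed.

Lemma L_le2 a : 0 < a <= 2^-1 -> Lf a <= 2.
Proof.
move=> /andP[a0 a2].
have a1 : a < 1 by apply: le_lt_trans a2 _; rewrite invf_lt1 // ltr1n.
apply: le_trans (_ : \int[P]_x (0 + 2 * X x) <= _); last by rewrite Rint_linX add0r.
apply: le_Rintegral => //.
- by apply: intpwl; rewrite a0 a1.
- exact: intlin.
move=> x _; rewrite add0r /pw {3}XE.
apply: (le_trans (@E2r R a (ln (X x)) _)); first by rewrite (ltW a0) a1.
rewrite [2 * _]mulrC ler_pM2l ?expR_gt0 //.
rewrite -div1r ler_pdivrMr ?subr_gt0 //.
have : a * 2 <= 1 by rewrite -ler_pdivlMr // mul1r.
lra.
Qed.

Lemma small_a : exists a0, 0 < a0 < 1 /\ hf a0 < ln 2.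
Proof.
have := G_cont; move/cvgrPdist_lt => /(_ (4^-1) (ltac:(by rewrite invr_gt0))).
move/nbhs_ballP => [e /= e0 He].
pose a0 := Num.min (e / 2) 16^-1.
have a00 : 0 < a0 by rewrite /a0 lt_min divr_gt0 //= invr_gt0 ltr0n.
have a016 : a0 <= 16^-1 by rewrite /a0 ge_min lexx orbT.
have a0e : a0 < e.
  apply: le_lt_trans (_ : e / 2 < e); first by rewrite /a0 ge_min lexx.
  by rewrite ltr_pdivrMr // ltr_pMr // ltr1n.
have a01 : a0 < 1 by apply: le_lt_trans a016 _; rewrite invf_lt1 // ltr1n.
have := He a0; rewrite /ball /= sub0r normrN ger0_norm ?ltW // => /(_ a0e).
rewrite G0 /Gf (ger0_norm (ltW a00)) -/(Mf a0) => hG.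
exists a0; split; first by rewrite a00 a01.
have M34 : 3/4 < Mf a0.
  move: hG; rewrite ltr_norml => /andP[_ h]; lra.
apply: alg_small => //.
apply: L_le2; rewrite a00 /=; apply: le_trans a016 _.
by rewrite lef_pV2 ?posrE // ler_nat.
Qed.

Lemma h_cont a : 0 < a < 1 -> {for a, continuous hf}.
Proof.
move=> ha.
have ha' : 0 <= a <= 1 by case/andP: ha => *; rewrite !ltW.
have M0 := @Mpos a ha'.
have Mc : {for a, continuous Mf}.
  by apply: M_cont; rewrite inE /= in_itv /=.
have Lc := @L_cont a ha.
have H1 := cvgM (cvgM (@cvg_id _ (nbhs a)) Lc) (cvgV (lt0r_neq0 M0) Mc).
have H2 := continuous_comp Mc (continuous_ln M0).
have H3 := cvgB (H1 _ _ _) H2. exact: H3.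
Qed.

Lemma F_ge (x : T) : -1 <= X x * ln (X x).
Proof. by rewrite {1}XE; exact: E6. Qed.

Lemma mF : measurable_fun setT (fun x => X x * ln (X x)).
Proof. by apply: measurable_funM => //; exact: mlnX. Qed.

Lemma intF2 (Hent : ((ln 2)%:E < \int[P]_x (X x * ln (X x))%:E)%E) :
  ((ln 2 + 2)%:E < \int[P]_x (X x * ln (X x) + 2)%:E)%E.
Proof.
have [iF|niF] := boolP (P.-integrable setT (EFin \o (fun x => X x * ln (X x)))).
  have -> : (\int[P]_x (X x * ln (X x) + 2)%:E = \int[P]_x (X x * ln (X x))%:E + 2%:E)%E.
    rewrite (_ : \int[P]_x ((X x * ln (X x) + 2)%R)%:E = \int[P]_x ((EFin \o (fun x => (X x * ln (X x))%R)) \+ (EFin \o cst 2%R)) x)%E //.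
    rewrite integralD_EFin //; last exact: intcst.
    by rewrite (_ : \int[P]_x (EFin \o cst 2%R) x = \int[P]_x (cst 2%:E) x)%E // integral_cst // Pset mule1.
  by rewrite EFinD lteD2rE.
have : (\int[P]_x `|(X x * ln (X x))%:E| = +oo)%E.
  apply/eqP; rewrite -leye_eq leNgt; apply/negP => hlt.
  move/negP: niF; apply; apply/integrableP; split => //.
  exact/measurable_EFinP/mF.
move=> hoo.
have : (\int[P]_x `|(X x * ln (X x))%:E| <= \int[P]_x (X x * ln (X x) + 2)%:E)%E.
  apply: ge0_le_integral => //.
  - by apply: measurableT_comp => //; exact/measurable_EFinP/mF.
  - by apply/measurable_EFinP; apply: measurable_funD => //; exact: mF.
  - move=> x _; rewrite /= lee_fin; have := F_ge x.
    rewrite ler_norml => h; apply/andP; split; lra.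
by rewrite hoo leye_eq => /eqP ->; rewrite ltry.
Qed.

Lemma large_a (Hent : ((ln 2)%:E < \int[P]_x (X x * ln (X x))%:E)%E) :
  exists a1, 0 < a1 < 1 /\ ln 2 < hf a1.
Proof.
apply: contrapT => hne.
have hle a : 0 < a < 1 -> a * Lf a <= ln 2.
  move=> ha; have ha' : 0 <= a <= 1 by case/andP: ha => *; rewrite !ltW.
  apply: (@alg_large _ a (Lf a) (Mf a) (@Mpos a ha') (@Mle1 a ha')).
  rewrite leNgt; apply/negP => h; apply: hne; exists a; split => //.
pose an n : R := 1 - harmonic n / 2.
have an01 n : 0 < an n < 1.
  have h0 : 0 < harmonic n :> R by exact: harmonic_gt0.
  have h1 : harmonic n <= 1 :> R by rewrite /= invf_le1 // ler1n.
  rewrite /an; apply/andP; split; lra.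
have an1 : an @ \oo --> (1 : R).
  have H := cvgB (cvg_cst (1 : R)) (cvgMl (b := 2^-1) (@cvg_harmonic R)).
  have H' := H _ _ _; rewrite mul0r subr0 in H'; exact: H'.
pose f n x := ((an n * (pw (an n) x * ln (X x)) + 2)%:E)%E.
have f0 n x : (0 <= f n x)%E.
  rewrite /f lee_fin; have /andP[a0 _] := an01 n.
  have h := @E2l R (an n) (ln (X x)) a0.
  rewrite -(ler_pM2l a0) mulrN mulfV ?gt_eqF // in h; rewrite /pw; lra.
have mf n : measurable_fun setT (f n).
  apply/measurable_EFinP; apply: measurable_funD => //.
  by apply: measurable_funM => //; exact: mpwl.
have hF := fatou P measurableT mf (fun n x _ => f0 n x).
have hlim x : limn_einf (f^~ x) = ((X x * ln (X x) + 2)%:E)%E.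
  apply: (cvg_limn_einf_sup _).1.
  apply: cvg_EFin; first exact: nearW.
  have c1 : (fun n => an n * ln (X x)) @ \oo --> 1 * ln (X x) by apply: cvgMl.
  have c3 : (fun n => expR (an n * ln (X x))) @ \oo --> expR (1 * ln (X x)).
    by apply: (cvg_comp _ _ c1); exact: continuous_expR.
  have c3' : (fun n => expR (an n * ln (X x)) * ln (X x)) @ \oo --> expR (1 * ln (X x)) * ln (X x).
    by apply: cvgMl.
  have c4 : (fun n => an n * (expR (an n * ln (X x)) * ln (X x))) @ \oo --> 1 * (expR (1 * ln (X x)) * ln (X x)).
    by apply: cvgM.
  have c5 : (fun n => an n * (expR (an n * ln (X x)) * ln (X x)) + 2) @ \oo --> 1 * (expR (1 * ln (X x)) * ln (X x)) + 2.
    by apply: cvgD => //; exact: cvg_cst.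
  by rewrite !mul1r -XE in c5.
have hlhs : (\int[P]_x limn_einf (f^~ x) = \int[P]_x ((X x * ln (X x) + 2)%:E))%E.
  by apply: eq_integral => x _; rewrite hlim.
have hrhs : (limn_einf (fun n => \int[P]_x f n x) <= (ln 2 + 2)%:E)%E.
  rewrite limn_einf_lim; apply: lime_le; first exact: is_cvg_einfs.
  apply: nearW => n.
  apply: (@le_trans _ _ (\int[P]_x f n x)%E).
    by apply: ereal_inf_lbound; exists n => //=.
  have ha := an01 n.
  have iF : P.-integrable setT (EFin \o (fun x => an n * (pw (an n) x * ln (X x)) + 2)).
    by apply: intD; [apply: intZ; exact: intpwl | exact: intcst].
  rewrite /f -[X in (X <= _)%E]fineK; last exact: integrable_fin_num iF.
  rewrite lee_fin -/(Rintegral P setT _) RintegralD //; last 2 first.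
  - by apply: intZ; exact: intpwl.
  - exact: intcst.
  rewrite RintegralZl //; last exact: intpwl.
  rewrite Rint_cst.
  by rewrite lerD2r; exact: hle.
have := intF2 Hent; rewrite -hlhs => h1.
have := lt_le_trans h1 (le_trans hF hrhs).
by rewrite ltxx.
Qed.

Lemma main_sec (Hent : ((ln 2)%:E < \int[P]_x (X x * ln (X x))%:E)%E) :
  exists! a : R, ((0 < a < 1)%R /\
    \int[P]_x (tilted P X a x * ln (tilted P X a x))%:E = (ln 2)%:E)%E.
Proof.
have [a0 [ha0 h0]] := small_a.
have [a1 [ha1 h1]] := large_a Hent.
have a01 : a0 < a1.
  rewrite ltNge le_eqVlt; apply/negP => /orP[/eqP e|lt10].
    by move: h1; rewrite e => /(lt_trans h0); rewrite ltxx.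
  have := @hf_mono Hent a1 a0 (proj1 (andP ha1)) lt10 (proj2 (andP ha0)).
  by move=> /(lt_trans h1) /(lt_trans h0); rewrite ltxx.
have cont : {within `[a0, a1], continuous hf}.
  apply: continuous_in_subspaceT => x; rewrite inE /= in_itv /= => /andP[x0 x1].
  apply: h_cont; case/andP: ha0 => p0 _; case/andP: ha1 => _ q1.
  by rewrite (lt_le_trans p0 x0) (le_lt_trans x1 q1).
have [c cin hc] := @IVT R hf a0 a1 (ln 2) (ltW a01) cont
  (ltac:(by rewrite ge_min ltW //= le_max (ltW h1) orbT)).
move: cin; rewrite in_itv /= => /andP[c0 c1].
have hc01 : 0 < c < 1.
  case/andP: ha0 => p0 _; case/andP: ha1 => _ q1.
  by rewrite (lt_le_trans p0 c0) (le_lt_trans c1 q1).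
exists c; split.
  by split => //; rewrite ent_eq // hc.
move=> y [hy]; rewrite ent_eq // => hy2; case: hy2 => hy2.
apply/eqP; rewrite eq_le; apply/andP; split; rewrite leNgt; apply/negP => h.
- have := @hf_mono Hent y c (proj1 (andP hy)) h (proj2 (andP hc01)).
  by rewrite hc hy2 ltxx.
- have := @hf_mono Hent c y (proj1 (andP hc01)) h (proj2 (andP hy)).
  by rewrite hc hy2 ltxx.
Qed.

End main.

Local Open Scope ring_scope.
Local Open Scope ereal_scope.

Theorem mainTheorem1 (d : measure_display) (T : measurableType d) (R : realType)
  (P : probability T R) (X : T -> R)
  (mX : measurable_fun setT X)
  (Xpos : forall t, (0 < X t)%R)
  (EX1 : \int[P]_x (X x)%:E = 1)
  (Hent : (ln 2)%:E < \int[P]_x (X x * ln (X x))%:E) :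
  exists! a : R, ((0 < a < 1)%R /\
    \int[P]_x (tilted P X a x * ln (tilted P X a x))%:E = (ln 2)%:E).
Proof. exact: main_sec. Qed.
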